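(* Let $G=(V,E)$ be a claw-free graph and $I$ a maximum cardinality independent set of $G$. Assume there exist a minimum independent dominating set $D$ of $G$ and a pack $X$ with $|D\cap X|>1$. Then there exists a minimum independent dominating set $D'$ of $G$ with $D'\cap I\neq\emptyset$.
   Context: Graphs are finite, simple, undirected; claw-free means no induced $K_{1,3}$. An independent dominating set is an independent set $S$ such that every vertex outside $S$ has a neighbour in $S$; a minimum independent dominating set is one of minimum cardinality. For $a\ne b$ in $I$ let $V_{a,b}=\{v\in V\setminus I: N(v)\cap I=\{a,b\}\}$, and for $a\in I$ let $V_a=\{v\in V\setminus I : N(v)\cap I=\{a\}\}$; these sets are called packs. *)

(* Defs.v *)
From mathcomp Require Import all_boot.
Set Implicit Arguments. Unset Strict Implicit. Unset Printing Implicit Defensive.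

Definition simple_graph (T : finType) (e : rel T) : Prop :=
  symmetric e /\ irreflexive e.

Definition nbhd (T : finType) (e : rel T) (v : T) : {set T} := [set u | e v u].

Definition claw_free (T : finType) (e : rel T) : Prop :=
  forall c x y z : T, e c x -> e c y -> e c z ->
    x != y -> x != z -> y != z ->
    e x y || e x z || e y z.

Definition independent (T : finType) (e : rel T) (S : {set T}) : Prop :=
  forall x y, x \in S -> y \in S -> ~~ e x y.

Definition maximum_independent (T : finType) (e : rel T) (S : {set T}) : Prop :=
  independent e S /\ forall S' : {set T}, independent e S' -> #|S'| <= #|S|.

Definition dominating (T : finType) (e : rel T) (S : {set T}) : Prop :=
  forall v, v \notin S -> exists2 u, u \in S & e v u.

Definition independent_dominating (T : finType) (e : rel T) (S : {set T}) : Prop :=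
  independent e S /\ dominating e S.

Definition min_independent_dominating (T : finType) (e : rel T) (S : {set T}) : Prop :=
  independent_dominating e S /\
  forall S' : {set T}, independent_dominating e S' -> #|S| <= #|S'|.

Definition pack2 (T : finType) (e : rel T) (I : {set T}) (a b : T) : {set T} :=
  [set v | (v \notin I) && (nbhd e v :&: I == [set a; b])].

Definition pack1 (T : finType) (e : rel T) (I : {set T}) (a : T) : {set T} :=
  [set v | (v \notin I) && (nbhd e v :&: I == [set a])].

Definition is_pack (T : finType) (e : rel T) (I X : {set T}) : Prop :=
  (exists a b, [/\ a \in I, b \in I, a != b & X = pack2 e I a b]) \/
  (exists2 a, a \in I & X = pack1 e I a).

(* Main.v *)
Require Import Defs.
From mathcomp Require Import all_boot.

Lemma pack2_mem {T : finType} {e : rel T} {I : {set T}} {a b v} :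
  v \in pack2 e I a b -> v \notin I /\ (forall i, i \in I -> e v i = (i == a) || (i == b)).
Proof.
rewrite inE => /andP [vI /eqP H]; split => // i iI.
move/setP/(_ i): H.
by rewrite !inE iI andbT.
Qed.

Lemma pack1_mem {T : finType} {e : rel T} {I : {set T}} {a v} :
  v \in pack1 e I a -> v \notin I /\ (forall i, i \in I -> e v i = (i == a)).
Proof.
rewrite inE => /andP [vI /eqP H]; split => // i iI.
move/setP/(_ i): H.
by rewrite !inE iI andbT.
Qed.

Theorem lemma8 (T : finType) (e : rel T) (I D X : {set T}) :
  simple_graph e -> claw_free e -> maximum_independent e I ->
  min_independent_dominating e D -> is_pack e I X -> 1 < #|D :&: X| ->
  exists D' : {set T}, min_independent_dominating e D' /\ D' :&: I != set0.
Proof.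
move=> [esym eirr] claw [Iind Imax] [[Dind Ddom] Dmin] Xp /card_gt1P [x [y [xDX yDX xy]]].
move: xDX yDX; rewrite !inE => /andP [xD xX] /andP [yD yX].
have nxy : ~~ e x y by apply: Dind.
case: Xp => [[a [b [aI bI ab XE]]] | [a aI XE]]; last first.
  subst X.
  have [xI xN] := pack1_mem xX; have [yI yN] := pack1_mem yX.
  pose I' := (I :\ a) :|: [set x; y].
  have : independent e I'.
    move=> p q; rewrite !inE => /orP [/andP [pa pI] | /orP [] /eqP ->]
                              /orP [/andP [qa qI] | /orP [] /eqP ->].
    - exact: Iind.
    - by rewrite esym xN // (negbTE pa).
    - by rewrite esym yN // (negbTE pa).
    - by rewrite xN // (negbTE qa).
    - by rewrite eirr.
    - done.
    - by rewrite yN // (negbTE qa).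
    - by rewrite esym.
    - by rewrite eirr.
  move/Imax; rewrite /I' cardsU.
  have -> : (I :\ a) :&: [set x; y] = set0.
    apply/setP => z; rewrite !inE.
    apply/negbTE; rewrite negb_and; apply/orP.
    case: (boolP (z \in I)) => zI; last by left; rewrite andbF.
    right; rewrite negb_or; apply/andP; split.
      by apply: contraNneq xI => <-.
    by apply: contraNneq yI => <-.
  rewrite cards0 subn0 cards2 xy (cardsD1 a I) aI.
  by rewrite add1n /= addnS ltnS addn1 ltnn.
subst X.
case: (boolP (D :&: I == set0)) => [/eqP DI0 | DIn]; last by exists D.
have notDI : forall v, v \in D -> v \notin I.
  by move=> v vD; apply/negP => vI; move/setP/(_ v): DI0; rewrite !inE vD vI.
have [xI xN] := pack2_mem xX; have [yI yN] := pack2_mem yX.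
have exa : e x a by rewrite xN // eqxx.
have exb : e x b by rewrite xN // eqxx orbT.
have eya : e y a by rewrite yN // eqxx.
have eyb : e y b by rewrite yN // eqxx orbT.
have nab : ~~ e a b by apply: Iind.
have nbrs : forall c u, (c = a \/ c = b) -> u \in D -> e c u -> (u == x) || (u == y).
  move=> c u Hc uD ecu; apply/negPn/negP; rewrite negb_or => /andP [ux uy].
  have := claw c x y u.
  have ecx : e c x by case: Hc => ->; rewrite esym.
  have ecy : e c y by case: Hc => ->; rewrite esym.
  move/(_ ecx ecy ecu xy); rewrite eq_sym ux eq_sym uy => /(_ isT isT).
  by rewrite (negbTE nxy) (negbTE (Dind _ _ xD uD)) (negbTE (Dind _ _ yD uD)).
pose D' := (D :\: [set x; y]) :|: [set a; b].
have D'ind : independent e D'.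
  have side : forall p q, p \in D :\: [set x; y] -> q \in [set a; b] -> ~~ e p q.
    move=> p q; rewrite !inE negb_or => /andP [/andP [px py] pD] Hq.
    apply/negP => epq.
    have Hc : q = a \/ q = b by case/orP: Hq => /eqP ->; [left|right].
    by have := nbrs q p Hc pD; rewrite esym epq (negbTE px) (negbTE py) => /(_ isT).
  move=> p q /setUP [pl | pr] /setUP [ql | qr].
  - by move: pl ql; rewrite !inE => /andP [_ ?] /andP [_ ?]; apply: Dind.
  - exact: side.
  - by rewrite esym; apply: side.
  - have sI : forall z, z \in [set a; b] -> z \in I.
      by move=> z; rewrite !inE => /orP [] /eqP ->.
    by apply: Iind; apply: sI.
have D'dom : dominating e D'.
  move=> v vD'.
  have va : v != a by apply: contraNneq vD' => ->; rewrite !inE eqxx orbT.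
  have vb : v != b by apply: contraNneq vD' => ->; rewrite !inE eqxx !orbT.
  have aD' : a \in D' by rewrite !inE eqxx orbT.
  have bD' : b \in D' by rewrite !inE eqxx !orbT.
  case: (boolP (v \in D)) => vD.
    have : (v == x) || (v == y).
      by apply/negPn/negP => H; move: vD'; rewrite !inE vD andbT H.
    by case/orP => /eqP ->; exists a.
  have [u uD evu] := Ddom v vD.
  case: (boolP ((u == x) || (u == y))) => Hu; last first.
    by exists u => //; rewrite !inE uD andbT Hu.
  case: (boolP (e v a)) => eva; first by exists a.
  case: (boolP (e v b)) => evb; first by exists b.
  exfalso.
  have Hc : forall z, (z = x \/ z = y) -> e z a -> e z b -> e z v -> False.
    move=> z _ eza ezb ezv.
    have := claw z v a b ezv eza ezb va vb ab.
    by rewrite (negbTE eva) (negbTE evb) (negbTE nab).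
  by case/orP: Hu => /eqP Hu; subst u; [apply: (Hc x) | apply: (Hc y)]; try (by left); try (by right); rewrite // esym.
have D'card : #|D'| <= #|D|.
  rewrite /D' cardsU.
  have := cardsID [set x; y] D.
  have -> : D :&: [set x; y] = [set x; y].
    by apply/setIidPr/subsetP => z; rewrite !inE => /orP [] /eqP ->.
  rewrite cards2 xy => <-.
  by rewrite cards2 ab addnC leq_subr.
exists D'; split.
  split; first by split.
  move=> S' HS'; apply: leq_trans D'card _; exact: Dmin.
by apply/set0Pn; exists a; rewrite !inE eqxx aI orbT.
Qed.
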